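(* Assume hypotheses (H1) and (H2) below with constants $0<\delta<1$, $\gamma>0$. Fix a positive integer $r$ and a prime $p$. If $X>p^{\frac{1+\gamma}{1-\delta}}$, then $$\frac{1}{|L(X)^{r_2}|}\sum_{K\in L(X)^{r_2}}a_\rho(p)^r=\frac{n_r}{1+f(p)}+O(p^{-1}),$$ where $n_r$ is the multiplicity of the trivial representation in $\rho^{\otimes r}$, and the implied constant depends only on $r$, $d$ and the constants in (H1), (H2).
   Context: $d\ge2$, $G=S_{d+1}$, $\rho$ the $d$-dimensional standard representation of $S_{d+1}$, fixed signature $(r_1,r_2)$. An $S_{d+1}$-field is a degree $d+1$ number field whose Galois closure has Galois group $S_{d+1}$; $L(s,\rho,K)=\zeta_K(s)/\zeta(s)=\sum a_\rho(n)n^{-s}$ (so $-1\le a_\rho(p)\le d$, and $a_\rho(p)=\chi_\rho(\mathrm{Frob}_p)$ for unramified $p$). $L(X)^{r_2}$ is the set of $S_{d+1}$-fields of signature $(r_1,r_2)$ with $|d_K|<X$, up to isomorphism. Local conditions: $\mathcal S_{p,C}$ ($p$ unramified, $\mathrm{Frob}_p\in C$) with weight $\frac{|C|}{|G|(1+f(p))}$; $\mathcal S_{p,r_i}$ ($p$ ramified of splitting type $r_i$, $i=1,\dots,w$) with weight $\frac{c_i(p)}{1+f(p)}$, where $f(p)=O(1/p)$ positive, $c_i(p)>0$, $\sum_ic_i(p)=f(p)$. For a finite set $\mathcal S$ of local conditions at distinct primes, $|\mathcal S|$ is the product of weights, and $L(X;\mathcal S)^{r_2}$ the subset of $L(X)^{r_2}$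 satisfying them. (H1) $|L(X)^{r_2}|=A(r_2)X+O(X^\delta)$; (H2) $|L(X;\mathcal S)^{r_2}|=|\mathcal S|A(r_2)X+O((\prod_{p\in\mathcal S}p)^\gamma X^\delta)$, uniformly in the primes and local conditions. *)

(* Defs.v *)
From mathcomp Require Import all_boot fingroup perm.
From Stdlib Require Import Reals.
Set Implicit Arguments. Unset Strict Implicit. Unset Printing Implicit Defensive.

Notation SymG d := {perm 'I_d.+1}.

(* Character of the d-dimensional standard representation rho of S_{d+1}:
   chi_rho(g) = #(fixed points of g) - 1. *)
Definition chi_std (d : nat) (g : SymG d) : Z :=
  (Z.of_nat #|[set i | g i == i]| - 1)%Z.

(* n_r = multiplicity of the trivial representation in rho^{(x) r}
       = <chi_rho^r, 1>_G = (1/|G|) sum_{g in G} chi_rho(g)^r. *)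
Definition n_mult (d r : nat) : R :=
  (\big[Rplus/0%R]_(g : SymG d) IZR (chi_std g ^ Z.of_nat r)%Z
     / INR #|SymG d|)%R.

(* Local conditions at a prime p:
   LUnr C : p unramified and Frob_p in the conjugacy class C,
   LRam i : p ramified of splitting type r_i (i : 'I_w). *)
Inductive lcond (d w : nat) : Type :=
| LUnr of {set SymG d}
| LRam of 'I_w.

Definition fsum (w : nat) (c : 'I_w -> nat -> R) (p : nat) : R :=
  \big[Rplus/0%R]_(i < w) c i p.

Definition lweight (d w : nat) (c : 'I_w -> nat -> R) (p : nat)
    (l : lcond d w) : R :=
  match l with
  | LUnr C => (INR #|C| / (INR #|SymG d| * (1 + fsum c p)))%R
  | LRam i => (c i p / (1 + fsum c p))%R
  end.

(* |S| = product of the weights of a finite set S of local conditions,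
   represented as a list of (prime, condition) pairs. *)
Definition setweight (d w : nat) (c : 'I_w -> nat -> R)
    (S : seq (nat * lcond d w)) : R :=
  \big[Rmult/1%R]_(s <- S) lweight c s.1 s.2.

(* A field K satisfies the local condition l at p, given the local data
   ram K p (None = unramified, Some i = ramified of splitting type r_i)
   and frob K p (a representative of Frob_p when p is unramified). *)
Definition sat_cond (d w : nat) (F : Type)
    (ram : F -> nat -> option 'I_w) (frob : F -> nat -> SymG d)
    (K : F) (p : nat) (l : lcond d w) : bool :=
  match l with
  | LUnr C => (ram K p == None) && (frob K p \in C)
  | LRam i => ram K p == Some i
  end.

Definition sat_all (d w : nat) (F : Type)
    (ram : F -> nat -> option 'I_w) (frob : F -> nat -> SymG d)
    (S : seq (nat * lcond d w)) (K : F) : bool :=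
  all (fun s => sat_cond ram frob K s.1 s.2) S.

Definition Rsum (l : seq R) : R := foldr Rplus 0%R l.

(* Main.v *)
Set Warnings "-notation-overridden".
From HB Require Import structures.
From Stdlib Require Import Lra Lia.
Require Import Defs.
From mathcomp Require Import all_boot fingroup perm.
From Stdlib Require Import Reals.
Open Scope R_scope.
Set Implicit Arguments. Unset Strict Implicit.

HB.instance Definition _ := Monoid.isComLaw.Build R 0%R Rplus (fun a b c => esym (Rplus_assoc a b c)) Rplus_comm Rplus_0_l.
HB.instance Definition _ := Monoid.isComLaw.Build R 1%R Rmult (fun a b c => esym (Rmult_assoc a b c)) Rmult_comm Rmult_1_l.
HB.instance Definition _ := Monoid.isMulLaw.Build R 0%R Rmult Rmult_0_l Rmult_0_r.
HB.instance Definition _ := Monoid.isAddLaw.Build R Rmult Rplus Rmult_plus_distr_r Rmult_plus_distr_l.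

Lemma chi_conj d (x y : SymG d) : chi_std (x ^ y)%g = chi_std x.
Proof.
rewrite /chi_std; congr (Z.of_nat _ - 1)%Z.
have -> : [set i | (x ^ y)%g i == i] = (y^-1)%g @^-1: [set j | x j == j].
  apply/setP => i; rewrite !inE conjgE !permM.
  apply/eqP/eqP => h.
  - by apply: (@perm_inj _ y); rewrite h permKV.
  - by rewrite h permKV.
by rewrite card_preimset //; exact: perm_inj.
Qed.

Definition ind (b : bool) : R := if b then 1 else 0.

Lemma class_decomp d (phi : SymG d -> R)
  (hphi : forall x y, phi (x ^ y)%g = phi x) (g : SymG d) :
  phi g = \big[Rplus/0]_(C in classes [set: SymG d]) (phi (repr C) * ind (g \in C)).
Proof.
rewrite (bigD1 (g ^: [set: SymG d])%g) ?mem_classes ?inE //=.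
rewrite big1 ?Rplus_0_r.
  have /imsetP[z _ ->] : repr (g ^: [set: SymG d])%g \in (g ^: [set: SymG d])%g.
    by apply: mem_repr; apply: class_refl.
  by rewrite hphi class_refl /ind Rmult_1_r.
move=> C /andP[/imsetP[x _ ->] hne].
case hg: (g \in (x ^: [set: SymG d])%g); last by rewrite /ind Rmult_0_r.
move/class_eqP: hg => hg; by rewrite hg eqxx in hne.
Qed.

Lemma big_const_R (T : finType) (A : {pred T}) (c : R) :
  \big[Rplus/0]_(i in A) c = INR #|A| * c.
Proof.
rewrite big_const; elim: #|A| => [|n IH]; first by rewrite /= Rmult_0_l.
rewrite S_INR /= IH; ring.
Qed.

Lemma sum_ind (T : finType) (C : {pred T}) :
  \big[Rplus/0]_(g : T) ind (g \in C) = INR #|C|.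
Proof.
rewrite -(Rmult_1_r (INR _)) -big_const_R [RHS]big_mkcond /=.
by apply: eq_bigr => i _; rewrite /ind.
Qed.

Lemma class_sum d (phi : SymG d -> R)
  (hphi : forall x y, phi (x ^ y)%g = phi x) :
  \big[Rplus/0]_(g : SymG d) phi g =
  \big[Rplus/0]_(C in classes [set: SymG d]) (phi (repr C) * INR #|C|).
Proof.
rewrite (eq_bigr _ (fun g _ => class_decomp hphi g)) exchange_big /=.
apply: eq_bigr => C _; rewrite -big_distrr /=; congr (_ * _).
exact: sum_ind.
Qed.

Lemma size_filter_R (F : Type) (P : pred F) (l : seq F) :
  INR (size (filter P l)) = \big[Rplus/0]_(K <- l) ind (P K).
Proof.
elim: l => [|x l IH]; first by rewrite big_nil.
rewrite big_cons /=; case: (P x); [rewrite -/(size (x :: _)) S_INR IH /ind; ring | rewrite IH /ind; ring].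
Qed.

Lemma Rsum_big (F : Type) (f : F -> R) (l : seq F) :
  Rsum (map f l) = \big[Rplus/0]_(K <- l) f K.
Proof. elim: l => [|x l IH]; first by rewrite big_nil. by rewrite big_cons /= IH. Qed.

Lemma big_abs_le (I : Type) (r : seq I) (P : pred I) (x y : I -> R) :
  (forall i, P i -> Rabs (x i) <= y i) ->
  Rabs (\big[Rplus/0]_(i <- r | P i) x i) <= \big[Rplus/0]_(i <- r | P i) y i.
Proof.
move=> h; elim/big_rec2: _ => [|i a b Pi hab]; first by rewrite Rabs_R0; lra.
apply: Rle_trans (Rabs_triang _ _) _; have := h i Pi; lra.
Qed.

Lemma big_le (I : Type) (r : seq I) (P : pred I) (x y : I -> R) :
  (forall i, P i -> x i <= y i) ->
  \big[Rplus/0]_(i <- r | P i) x i <= \big[Rplus/0]_(i <- r | P i) y i.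
Proof.
move=> h; elim/big_rec2: _ => [|i a b Pi hab]; first lra.
have := h i Pi; lra.
Qed.

Lemma Zpow_bound (z dd : Z) (n : nat) : (-1 <= z <= dd)%Z -> (1 <= dd)%Z ->
  Rabs (IZR (z ^ Z.of_nat n)) <= IZR (dd ^ Z.of_nat n).
Proof.
move=> hz hd; rewrite -abs_IZR; apply: IZR_le.
rewrite Z.abs_pow; apply: Z.pow_le_mono_l; lia.
Qed.

Lemma chi_bound d (g : SymG d) : (-1 <= chi_std g <= Z.of_nat d)%Z.
Proof.
rewrite /chi_std.
have h : le #|[set i | g i == i]| d.+1.
  by apply/leP; rewrite -[X in is_true (leq _ X)](card_ord d.+1); exact: max_card.
lia.
Qed.

Lemma split_sum d w (F : Type) (ram : F -> nat -> option 'I_w)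
  (frob : F -> nat -> SymG d) (p : nat) (l : seq F) (h : F -> R)
  (psi : SymG d -> R) (hpsi : forall x y, psi (x ^ y)%g = psi x) :
  (forall K, ram K p = None -> h K = psi (frob K p)) ->
  \big[Rplus/0]_(K <- l) h K =
   \big[Rplus/0]_(C in classes [set: SymG d])
      (psi (repr C) * INR (size (filter (sat_all ram frob [:: (p, LUnr w C)]) l)))
   + \big[Rplus/0]_(K <- l) (ind (ram K p != None) * h K).
Proof.
move=> hh.
rewrite (eq_bigr (fun K => \big[Rplus/0]_(C in classes [set: SymG d])
    (psi (repr C) * ind (sat_all ram frob [:: (p, LUnr w C)] K))
    + ind (ram K p != None) * h K)).
  rewrite big_split /= exchange_big /=; congr (_ + _).
  by apply: eq_bigr => C _; rewrite -big_distrr size_filter_R.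
move=> K _; rewrite /sat_all /=.
case e: (ram K p) => [i|] /=.
  rewrite big1 ?Rplus_0_l /ind ?Rmult_1_l // => C _; exact: Rmult_0_r.
rewrite /ind Rmult_0_l Rplus_0_r hh // (class_decomp hpsi (frob K p)).
by apply: eq_bigr => C _; rewrite andbT.
Qed.

Lemma rpow_facts (P X gamma delta : R) : 1 < P -> 0 < gamma -> 0 < delta < 1 ->
  X > Rpower P ((1 + gamma) / (1 - delta)) ->
  1 < X /\ Rpower P gamma * Rpower X delta * P <= X /\ Rpower X delta * P <= X.
Proof.
move=> hP hg hd hX.
have he : 0 < (1 + gamma) / (1 - delta).
  apply: Rdiv_lt_0_compat; lra.
have h1 : 1 < Rpower P ((1 + gamma) / (1 - delta)).
  have := Rpower_lt _ _ _ hP he; rewrite Rpower_O; lra.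
have hX0 : 0 < X by lra.
have key : Rpower P (1 + gamma) < Rpower X (1 - delta).
  have -> : 1 + gamma = (1 + gamma) / (1 - delta) * (1 - delta) by field; lra.
  rewrite -Rpower_mult; apply: Rlt_Rpower_l; first lra.
  split; [apply: exp_pos | lra].
have hXd : 0 < Rpower X delta by apply: exp_pos.
have hsplit : X = Rpower X (1 - delta) * Rpower X delta.
  rewrite -Rpower_plus (_ : 1 - delta + delta = 1); [by rewrite Rpower_1 | ring].
have hPP : Rpower P gamma * P = Rpower P (1 + gamma).
  by rewrite Rpower_plus Rpower_1; [ring | lra].
have hPle : P <= Rpower P (1 + gamma).
  rewrite -{1}(Rpower_1 P); last lra. apply: Rle_Rpower; lra.
split; first lra.
split.
- have -> : Rpower P gamma * Rpower X delta * P = Rpower P (1 + gamma) * Rpower X delta.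
    by rewrite -hPP; ring.
  rewrite {2}hsplit; apply: Rmult_le_compat_r; lra.
- rewrite {2}hsplit Rmult_comm; apply: Rmult_le_compat_r; lra.
Qed.

Lemma big_const_full (T : finType) (c : R) :
  \big[Rplus/0]_(i : T) c = INR #|T| * c.
Proof.
rewrite (eq_bigl (fun i => i \in [set: T])); last by move=> i; rewrite inE.
by rewrite big_const_R cardsT.
Qed.

Lemma big_const_seqR (F : Type) (l : seq F) (c : R) :
  \big[Rplus/0]_(K <- l) c = INR (size l) * c.
Proof.
elim: l => [|x l IH]; first by rewrite big_nil /=; ring.
rewrite big_cons IH (_ : size (x :: l) = (size l).+1) // S_INR; ring.
Qed.

Lemma div_le_l (a b c : R) : 0 < c -> a <= b * c -> a / c <= b.
Proof. move=> hc h; apply (Rmult_le_reg_r c) => //; unfold Rdiv; rewrite Rmult_assoc Rinv_l; lra. Qed.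
Lemma le_div_r (a b c : R) : 0 < c -> a * c <= b -> a <= b / c.
Proof. move=> hc h; apply (Rmult_le_reg_r c) => //; unfold Rdiv; rewrite Rmult_assoc Rinv_l; lra. Qed.
Lemma Rabs_divpos (a c : R) : 0 < c -> Rabs (a / c) = Rabs a / c.
Proof. move=> hc; unfold Rdiv; rewrite Rabs_mult Rabs_inv (Rabs_right c) //; lra. Qed.
Lemma Rabs_le0 (a : R) : Rabs a <= 0 -> a = 0.
Proof. unfold Rabs; case: (Rcase_abs a); lra. Qed.

Lemma final_ineq (N T n' A X D k C1 C2 Cf Z0 Xd P f Rc Ram SE S1 SN Sphi : R) :
  T = Sphi + Ram -> N = SN + Rc -> Rabs Ram <= D * Rc ->
  Sphi = SE + A * X * n' -> Rabs SE <= k * D * (C2 * Z0) ->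
  SN = S1 + A * X / (1 + f) -> Rabs S1 <= k * (C2 * Z0) ->
  Rabs (N - A * X) <= C1 * Xd ->
  Rabs n' <= D -> Rabs T <= D * N -> 0 <= N ->
  0 <= f -> f <= Cf / P -> Z0 * P <= X -> Xd * P <= X -> 1 < P -> 0 < A -> 0 < X ->
  0 <= D -> 0 <= k -> 0 <= Z0 -> 0 <= Xd ->
  Rabs (T / N - n') <=
  (2 * D * (2 * k * Rabs C2 + 2 * Rabs C1) / A + 2 * D * Rabs Cf + 4 * D * Rabs C1 / A) / P.
Proof.
move=> hT hN hRam hS hSE hSN hS1 hH1 hn hTN hN0 hf0 hf hZ hXd hP hA hX hD hk hZ0 hXd0.
have hP0 : 0 < P by lra.
have hC1 : C1 * Xd <= Rabs C1 * Xd by apply: Rmult_le_compat_r; [lra | apply: Rle_abs].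
have hC2 : C2 * Z0 <= Rabs C2 * Z0 by apply: Rmult_le_compat_r; [lra | apply: Rle_abs].
have hC1' : 0 <= Rabs C1 := Rabs_pos C1.
have hC2' : 0 <= Rabs C2 := Rabs_pos C2.
have hCf' : 0 <= Rabs Cf := Rabs_pos Cf.
have hXdq : Xd <= X / P by apply: le_div_r; lra.
have hZq : Z0 <= X / P by apply: le_div_r; lra.
have hfq : f <= Rabs Cf / P.
  apply: Rle_trans hf _; apply: Rmult_le_compat_r; [left; apply: Rinv_0_lt_compat; lra | apply: Rle_abs].
set Cst := (2 * D * (2 * k * Rabs C2 + 2 * Rabs C1) / A + 2 * D * Rabs Cf + 4 * D * Rabs C1 / A).
have hTNb : Rabs (T / N) <= D.
  case: (Req_dec N 0) => [e|ne].
    have -> : T = 0 by rewrite e Rmult_0_r in hTN; exact: Rabs_le0.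
    rewrite /Rdiv Rmult_0_l Rabs_R0; lra.
  have hNp : 0 < N by case: (Rle_lt_or_eq_dec _ _ hN0) => // h; exfalso; exact: ne (Logic.eq_sym h).
  rewrite Rabs_divpos //; apply: div_le_l; lra.
have hCst0 : 0 <= 2 * D * (2 * k * Rabs C2 + 2 * Rabs C1) / A.
  apply: Rmult_le_pos; last by left; apply: Rinv_0_lt_compat.
  apply: Rmult_le_pos; first lra.
  have : 0 <= k * Rabs C2 by apply: Rmult_le_pos.
  lra.
have hCf0 : 0 <= 2 * D * Rabs Cf by apply: Rmult_le_pos; lra.
case: (Rle_lt_dec (A * X / 2) N) => hcase.
- have hAX : 0 < A * X by apply: Rmult_lt_0_compat.
  have hNpos : 0 < N by lra.
  have hrew : T / N - n' = (T - N * n') / N by field; lra.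
  have hid : T - N * n' = SE + (A * X - N) * n' + Ram by rewrite hT hS; ring.
  have hRc : Rc = (N - A * X) - S1 + A * X * (f / (1 + f)) by rewrite hN hSN; field; lra.
  have hff : f / (1 + f) <= f.
    apply: div_le_l; first lra. have : 0 <= f * f by apply: Rmult_le_pos. lra.
  have hRcb : Rc <= Rabs C1 * Xd + k * (Rabs C2 * Z0) + A * X * f.
    have h1 := Rle_abs (N - A * X).
    have h2 := Rle_abs (- S1). rewrite Rabs_Ropp in h2.
    have h3 : A * X * (f / (1 + f)) <= A * X * f by apply: Rmult_le_compat_l; lra.
    have h4 : k * (C2 * Z0) <= k * (Rabs C2 * Z0) by apply: Rmult_le_compat_l.
    lra.
  have hmid : Rabs ((A * X - N) * n') <= Rabs C1 * Xd * D.
    rewrite Rabs_mult; apply: Rmult_le_compat; try apply: Rabs_pos; last lra.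
    rewrite -Rabs_Ropp (_ : - (A * X - N) = N - A * X); [lra | ring].
  have hV : Rabs (T - N * n') <=
      D * (2 * k * (Rabs C2 * Z0) + 2 * (Rabs C1 * Xd) + A * X * f).
    rewrite hid.
    have t1 := Rabs_triang (SE + (A * X - N) * n') Ram.
    have t2 := Rabs_triang SE ((A * X - N) * n').
    have h4 : k * D * (C2 * Z0) <= k * D * (Rabs C2 * Z0).
      by apply: Rmult_le_compat_l; [apply: Rmult_le_pos | ].
    have h5 : D * Rc <= D * (Rabs C1 * Xd + k * (Rabs C2 * Z0) + A * X * f).
      by apply: Rmult_le_compat_l.
    nra.
  have hV' : D * (2 * k * (Rabs C2 * Z0) + 2 * (Rabs C1 * Xd) + A * X * f)
      <= D * (X / P) * (2 * k * Rabs C2 + 2 * Rabs C1 + A * Rabs Cf).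
    have e1 : k * (Rabs C2 * Z0) <= k * (Rabs C2 * (X / P)).
      apply: Rmult_le_compat_l => //; apply: Rmult_le_compat_l => //.
    have e2 : Rabs C1 * Xd <= Rabs C1 * (X / P) by apply: Rmult_le_compat_l.
    have e3 : A * X * f <= A * X * (Rabs Cf / P) by apply: Rmult_le_compat_l; lra.
    have -> : D * (X / P) * (2 * k * Rabs C2 + 2 * Rabs C1 + A * Rabs Cf) =
        D * (2 * (k * (Rabs C2 * (X / P))) + 2 * (Rabs C1 * (X / P)) + A * X * (Rabs Cf / P)).
      field; lra.
    apply: Rmult_le_compat_l => //; lra.
  rewrite hrew Rabs_divpos; last lra.
  apply: div_le_l => //.
  apply: Rle_trans hV _; apply: Rle_trans hV' _.
  have -> : Cst / P * N = (Cst * N) / P by field; lra.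
  have -> : D * (X / P) * (2 * k * Rabs C2 + 2 * Rabs C1 + A * Rabs Cf) =
     (D * X * (2 * k * Rabs C2 + 2 * Rabs C1 + A * Rabs Cf)) / P by field; lra.
  apply: Rmult_le_compat_r; first by left; apply: Rinv_0_lt_compat.
  have -> : Cst = 2 * D * (2 * k * Rabs C2 + 2 * Rabs C1 + A * Rabs Cf) / A + 4 * D * Rabs C1 / A.
    rewrite /Cst; field; lra.
  have h4 : 0 <= 4 * D * Rabs C1 / A.
    apply: Rmult_le_pos; [apply: Rmult_le_pos; lra | left; apply: Rinv_0_lt_compat; lra].
  have hq : 0 <= D * (2 * k * Rabs C2 + 2 * Rabs C1 + A * Rabs Cf).
    apply: Rmult_le_pos => //.
    have : 0 <= k * Rabs C2 by apply: Rmult_le_pos.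
    have : 0 <= A * Rabs Cf by apply: Rmult_le_pos; lra.
    lra.
  have : D * X * (2 * k * Rabs C2 + 2 * Rabs C1 + A * Rabs Cf) <=
       2 * D * (2 * k * Rabs C2 + 2 * Rabs C1 + A * Rabs Cf) / A * N.
    have -> : 2 * D * (2 * k * Rabs C2 + 2 * Rabs C1 + A * Rabs Cf) / A * N =
       (D * (2 * k * Rabs C2 + 2 * Rabs C1 + A * Rabs Cf)) * (2 * N / A) by field; lra.
    have -> : D * X * (2 * k * Rabs C2 + 2 * Rabs C1 + A * Rabs Cf) =
       (D * (2 * k * Rabs C2 + 2 * Rabs C1 + A * Rabs Cf)) * X by ring.
    apply: Rmult_le_compat_l => //.
    apply: le_div_r => //; lra.
  have : 0 <= 4 * D * Rabs C1 / A * N by apply: Rmult_le_pos.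
  lra.
-
  have hbig : A * X / 2 < Rabs C1 * (X / P).
    have := Rle_abs (A * X - N); rewrite -Rabs_Ropp (_ : - (A * X - N) = N - A * X); last ring.
    have : Rabs C1 * Xd <= Rabs C1 * (X / P) by apply: Rmult_le_compat_l.
    lra.
  have hPA : P * A < 2 * Rabs C1.
    have e : A * X / 2 * P < Rabs C1 * (X / P) * P by apply: Rmult_lt_compat_r.
    have ee : Rabs C1 * (X / P) * P = Rabs C1 * X by field; lra.
    rewrite ee in e.
    have e' : (P * A) * X < (2 * Rabs C1) * X by lra.
    by apply: (Rmult_lt_reg_r X).
  have hL : Rabs (T / N - n') <= 2 * D.
    rewrite /Rminus; apply: Rle_trans (Rabs_triang _ _) _; rewrite Rabs_Ropp; lra.
  apply: Rle_trans hL _.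
  apply: le_div_r => //.
  have h4 : 2 * D * P <= 4 * D * Rabs C1 / A.
    apply: le_div_r => //.
    have : 0 <= D * (2 * Rabs C1 - P * A) by apply: Rmult_le_pos; lra.
    lra.
  rewrite /Cst; lra.
Qed.

Close Scope R_scope.

Theorem mainTheorem7
  (d : nat) (hd : (2 <= d)%N) (r : nat) (hr : (0 < r)%N)
  (delta gamma A C1 C2 Cf : R)
  (hdelta : (0 < delta < 1)%R) (hgamma : (0 < gamma)%R) (hA : (0 < A)%R) :
  exists Cst : R,
  forall (w : nat) (c : 'I_w -> nat -> R)
         (F : eqType) (disc : F -> nat) (L : R -> seq F)
         (ram : F -> nat -> option 'I_w) (frob : F -> nat -> SymG d)
         (a : F -> nat -> Z),
    (* local weights: c_i(p) > 0, f(p) = sum_i c_i(p) = O(1/p) *)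
    (0 < w)%N ->
    (forall i p, prime p -> (0 < c i p)%R) ->
    (forall p, prime p -> (fsum c p <= Cf / INR p)%R) ->
    (* L X enumerates (without repetition) the fields with |d_K| < X *)
    (forall X, uniq (L X) /\ forall K, K \in L X <-> (INR (disc K) < X)%R) ->
    (* a_rho(p): -1 <= a_rho(p) <= d, and a_rho(p) = chi_rho(Frob_p) if p unramified *)
    (forall K p, (-1 <= a K p <= Z.of_nat d)%Z) ->
    (forall K p, prime p -> ram K p = None -> a K p = chi_std (frob K p)) ->
    (* (H1) *)
    (forall X, (1 <= X)%R ->
       (Rabs (INR (size (L X)) - A * X) <= C1 * Rpower X delta)%R) ->
    (* (H2), uniformly in the primes and local conditions *)
    (forall X (S : seq (nat * lcond d w)), (1 <= X)%R ->
       all prime (map fst S) -> uniq (map fst S) ->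
       all (fun s => match s.2 with
                     | LUnr C => C \in classes [set: SymG d]
                     | LRam _ => true end) S ->
       (Rabs (INR (size (filter (sat_all ram frob S) (L X)))
              - setweight c S * A * X)
        <= C2 * Rpower (INR (\prod_(s <- S) s.1)%N) gamma * Rpower X delta)%R) ->
    forall (p : nat) (X : R), prime p ->
      (X > Rpower (INR p) ((1 + gamma) / (1 - delta)))%R ->
      (Rabs (Rsum (map (fun K => IZR (a K p ^ Z.of_nat r)%Z) (L X))
               / INR (size (L X))
             - n_mult d r / (1 + fsum c p))
       <= Cst / INR p)%R.
Proof.
Open Scope R_scope.
set D := IZR (Z.of_nat d ^ Z.of_nat r).
set k := INR #|classes [set: SymG d]|.
exists (2 * D * (2 * k * Rabs C2 + 2 * Rabs C1) / A + 2 * D * Rabs Cf + 4 * D * Rabs C1 / A).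
move=> w c F disc L ram frob a hw hc hCf hL hab hfrob H1 H2 p X hp hX.
have hP : 1 < INR p.
  have h2 : lt 1 p by apply/ltP; exact: prime_gt1.
  exact: (lt_INR 1 p h2).
have [hX1 [hZ hXd]] := rpow_facts hP hgamma hdelta hX.
have hd1 : (1 <= Z.of_nat d)%Z.
  have h2 : le 2 d by apply/leP.
  lia.
have hD0 : 0 <= D by apply: IZR_le; apply: Z.pow_nonneg; lia.
have hk0 : 0 <= k by apply: pos_INR.
set phi := fun x : SymG d => IZR (chi_std x ^ Z.of_nat r).
have hphi : forall x y, phi (x ^ y)%g = phi x by move=> x y; rewrite /phi chi_conj.
have hphiD : forall x, Rabs (phi x) <= D by move=> x; apply: Zpow_bound => //; exact: chi_bound.
have hgD : forall K, Rabs (IZR (a K p ^ Z.of_nat r)) <= D by move=> K; apply: Zpow_bound.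
set f := fsum c p.
have hf0 : 0 <= f.
  rewrite /f /fsum; elim/big_rec: _ => [|i x _ hx]; first lra.
  have := hc i p hp; lra.
set l := L X.
set N := INR (size l).
set NC := fun C : {set SymG d} =>
   INR (size (filter (sat_all ram frob [:: (p, LUnr w C)]) l)).
set G := INR #|SymG d|.
have hG : 0 < G.
  apply: lt_0_INR; apply/ltP; apply/card_gt0P; by exists 1%g.
set wC := fun C : {set SymG d} => INR #|C| / (G * (1 + f)).
set Z0 := Rpower (INR p) gamma * Rpower X delta.
have hE : forall C, C \in classes [set: SymG d] -> Rabs (NC C - wC C * A * X) <= C2 * Z0.
  move=> C hC.
  have := H2 X [:: (p, LUnr w C)] (Rlt_le _ _ hX1).
  rewrite /= hp hC /= => /(_ isT isT isT).
  rewrite /setweight !big_seq1 /= => h; rewrite !Rmult_assoc in h; rewrite /NC /wC /Z0 /G /l /f !Rmult_assoc; exact: h.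
set Cl := classes [set: SymG d].
set Sphi := \big[Rplus/0]_(C in Cl) (phi (repr C) * NC C).
set Ram := \big[Rplus/0]_(K <- l) (ind (ram K p != None) * IZR (a K p ^ Z.of_nat r)).
set SN := \big[Rplus/0]_(C in Cl) ((fun _ => 1) (repr C) * NC C).
set Rc := \big[Rplus/0]_(K <- l) (ind (ram K p != None) * 1).
set SE := \big[Rplus/0]_(C in Cl) (phi (repr C) * (NC C - wC C * A * X)).
set S1 := \big[Rplus/0]_(C in Cl) (NC C - wC C * A * X).
have e1 : Rsum (map (fun K => IZR (a K p ^ Z.of_nat r)%Z) l) = Sphi + Ram.
  rewrite Rsum_big; apply: split_sum => // K e.
  by rewrite hfrob.
have e2 : N = SN + Rc.
  have -> : N = \big[Rplus/0]_(K <- l) 1.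
    by rewrite /N big_const_seqR Rmult_1_r.
  by apply: split_sum.
have e3 : Rabs Ram <= D * Rc.
  have -> : D * Rc = \big[Rplus/0]_(K <- l) (ind (ram K p != None) * D).
    by rewrite /Rc big_distrr /=; apply: eq_bigr => K _; ring.
  apply: big_abs_le => K _; rewrite Rabs_mult.
  case: (ram K p != None); rewrite /ind ?Rabs_R1 ?Rabs_R0; [have := hgD K | ]; lra.
have hsumG : \big[Rplus/0]_(C in Cl) INR #|C| = G.
  have := @class_sum d (fun _ : SymG d => 1) (fun _ _ => Logic.eq_refl).
  rewrite big_const_full Rmult_1_r => h; rewrite /G h.
  by apply: eq_bigr => C _; ring.
have hn' : n_mult d r / (1 + f) = \big[Rplus/0]_(C in Cl) (phi (repr C) * wC C).
  rewrite /n_mult.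
  change (\big[Rplus/0]_(g : SymG d) IZR (chi_std g ^ Z.of_nat r)) with
     (\big[Rplus/0]_(g : SymG d) phi g).
  rewrite (class_sum hphi) -/Cl -/G /Rdiv !big_distrl /=.
  apply: eq_bigr => C _; rewrite /wC /Rdiv Rinv_mult; set z := phi _; set z2 := INR _; ring.
have e4 : Sphi = SE + A * X * (n_mult d r / (1 + f)).
  rewrite hn' big_distrr /= /SE -big_split /=.
  by apply: eq_bigr => C _; ring.
have e5 : Rabs SE <= k * D * (C2 * Z0).
  rewrite /k Rmult_assoc -big_const_R.
  apply: big_abs_le => C hC; rewrite Rabs_mult.
  apply: Rmult_le_compat; try apply: Rabs_pos; [exact: hphiD | exact: hE].
have e6 : SN = S1 + A * X / (1 + f).
  have hwC : \big[Rplus/0]_(C in Cl) (wC C * (A * X)) = A * X / (1 + f).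
    rewrite -big_distrl /=.
    have -> : \big[Rplus/0]_(C in Cl) wC C = (\big[Rplus/0]_(C in Cl) INR #|C|) * / (G * (1 + f)).
      by rewrite big_distrl.
    rewrite hsumG; field; lra.
  rewrite -hwC /S1 -big_split /=; apply: eq_bigr => C _; ring.
have e7 : Rabs S1 <= k * (C2 * Z0).
  rewrite /k -big_const_R; apply: big_abs_le => C hC; exact: hE.
have e8 : Rabs (N - A * X) <= C1 * Rpower X delta by apply: H1; lra.
have e9 : Rabs (n_mult d r / (1 + f)) <= D.
  rewrite Rabs_divpos; last lra.
  apply: div_le_l; first lra.
  rewrite /n_mult Rabs_divpos //.
  apply: div_le_l => //.
  have hfG : 0 <= D * f * G by apply: Rmult_le_pos; [apply: Rmult_le_pos | lra].
  apply: Rle_trans (_ : D * INR #|SymG d| <= _); last first.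
    apply: Rmult_le_compat_r; [exact: pos_INR | nra].
  apply: Rle_trans; first by apply: big_abs_le => g _; exact: (hphiD g).
  rewrite big_const_full Rmult_comm; apply: Rle_refl.
have e10 : Rabs (Rsum (map (fun K => IZR (a K p ^ Z.of_nat r)%Z) l)) <= D * N.
  rewrite Rsum_big; apply: Rle_trans; first by apply: big_abs_le => K _; exact: (hgD K).
  rewrite big_const_seqR /N; lra.
have hZ0 : 0 <= Z0 by rewrite /Z0; apply: Rmult_le_pos; left; apply: exp_pos.
have hXd0 : 0 <= Rpower X delta by left; apply: exp_pos.
exact: (final_ineq e1 e2 e3 e4 e5 e6 e7 e8 e9 e10 (pos_INR _) hf0 (hCf p hp) hZ hXd hP hA
          (ltac:(lra)) hD0 hk0 hZ0 hXd0).
Qed.
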